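(* Let $n\ge1$, $C>0$, $\sigma:\mathbb{R}\to\mathbb{R}$ a sigmoidal function, and let $\mathbf{A},\mathbf{B}\in\mathbb{R}^{n\times n}$ be non-singular diagonalizable matrices such that (i) $\mathbf{A}^q=a\mathbf{I}$ for some positive integer $q\le n$ and scalar $a\ne0$; (ii) $\mathbf{I}-a\mathbf{B}^q$ is nonsingular; (iii) the eigenvalues of $\mathbf{B}$ have pairwise distinct absolute values. Let $$G_\sigma=\{\mathbf{x}\mapsto\alpha\,\sigma(\mathbf{y}^T\mathbf{x}+\theta):\ |\alpha|\le 2C,\ \mathbf{y}\in\mathbb{R}^n,\ \theta\in\mathbb{R}\},$$ let $G^k_\sigma$ be the set of functions that are sums of at most $k$ elements of $G_\sigma$, and let $S^{kn}_\sigma$ be the set of functions $$\mathbf{x}\mapsto\sum_{j=1}^{kn}\alpha_j\,\sigma(\mathbf{y}_j^T\mathbf{x}+\theta_j)$$ with $|\alpha_j|\le 2C$, $\mathbf{y}_j\in\mathbb{R}^n$, $\theta_j\in\mathbb{R}$, such that for every $i=1,\dots,k$ the matrix $\mathbf{M}_i=[\mathbf{y}_{(i-1)n+1}|\mathbf{y}_{(i-1)n+2}|\cdots|\mathbf{y}_{in}]\in\mathbb{R}^{n\times n}$ satisfies $\mathbf{M}_i-\mathbf{A}\mathbf{M}_i\mathbf{B}=\mathbf{g}_i\mathbf{h}_i^T$ for some $\mathbf{g}_i,\mathbf{h}_i\in\mathbb{R}^n$. Then for every $k\ge1$, $G^k_\sigma\subseteq S^{kn}_\sigma$.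
   Context: A sigmoidal function is a bounded measurable function $\sigma:\mathbb{R}\to\mathbb{R}$ with $\sigma(t)\to1$ as $t\to+\infty$ and $\sigma(t)\to0$ as $t\to-\infty$. Functions are considered on $\mathbb{R}^n$ (or a ball in $\mathbb{R}^n$). *)

(* Defs.v *)
From HB Require Import structures.
From mathcomp Require Import all_boot all_order all_algebra.
From mathcomp Require Import all_classical all_reals all_analysis.
From mathcomp.real_closed Require Import complex.
From mathcomp Require Import zify.

Set Implicit Arguments.
Unset Strict Implicit.
Unset Printing Implicit Defensive.

Import Order.TTheory GRing.Theory Num.Theory.
Import numFieldNormedType.Exports.
Local Open Scope classical_set_scope.
Local Open Scope ring_scope.

Definition sigmoidal (R : realType) (s : R -> R) : Prop :=
  [/\ exists M : R, forall t, `|s t| <= M,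
      measurable_fun setT s,
      s t @[t --> +oo] --> (1 : R) &
      s t @[t --> -oo] --> (0 : R)].

Definition dotv (R : realType) (n : nat) (y x : 'cV[R]_n) : R :=
  (y^T *m x) 0 0.

Definition neuron (R : realType) (n : nat) (s : R -> R)
  (alpha : R) (y : 'cV[R]_n) (theta : R) : 'cV[R]_n -> R :=
  fun x => alpha * s (dotv y x + theta).

Definition Gsig (R : realType) (n : nat) (C : R) (s : R -> R)
  : set ('cV[R]_n -> R) :=
  [set f | exists alpha y theta, `|alpha| <= 2 * C /\ f = neuron s alpha y theta].

Definition Gsigk (R : realType) (n : nat) (C : R) (s : R -> R) (k : nat)
  : set ('cV[R]_n -> R) :=
  [set f | exists (m : nat) (g : 'I_m -> 'cV[R]_n -> R),
     [/\ (m <= k)%N, (forall i, Gsig C s (g i)) &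
         f = fun x => \sum_(i < m) g i x]].

Lemma blk_lt (k n : nat) (i : 'I_k) (c : 'I_n) : (i * n + c < k * n)%N.
Proof.
have Hi := ltn_ord i; have Hc := ltn_ord c.
have H : (i.+1 * n <= k * n)%N by rewrite leq_mul2r Hi orbT.
rewrite mulSn in H; lia.
Qed.

(* the (0-based) index i*n + c in 'I_(k*n), i.e. the 1-based index
   (i-1)n + c of the paper *)
Definition blk (k n : nat) (i : 'I_k) (c : 'I_n) : 'I_(k * n) :=
  Ordinal (blk_lt i c).

Definition blockM (R : realType) (k n : nat) (y : 'I_(k * n) -> 'cV[R]_n)
  (i : 'I_k) : 'M[R]_n :=
  \matrix_(r < n, c < n) y (blk i c) r 0.

Definition Ssig (R : realType) (n : nat) (C : R) (s : R -> R)
  (A B : 'M[R]_n) (k : nat) : set ('cV[R]_n -> R) :=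
  [set f | exists (alpha : 'I_(k * n) -> R) (y : 'I_(k * n) -> 'cV[R]_n)
                  (theta : 'I_(k * n) -> R),
     [/\ forall j, `|alpha j| <= 2 * C,
         forall i : 'I_k, exists g h : 'cV[R]_n,
           blockM y i - A *m blockM y i *m B = g *m h^T &
         f = fun x => \sum_(j < k * n) alpha j * s (dotv (y j) x + theta j)]].

Definition cmx (R : realType) (n : nat) (M : 'M[R]_n) : 'M[R[i]]_n :=
  map_mx (fun x : R => (x%:C)%C) M.

(* Main.v *)
Require Import Defs.
From HB Require Import structures.
From mathcomp Require Import all_boot all_order all_algebra.
From mathcomp Require Import all_classical all_reals all_analysis.
From mathcomp.real_closed Require Import complex.
From mathcomp Require Import lra.

Import Order.TTheory GRing.Theory Num.Theory.
Local Open Scope classical_set_scope.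
Local Open Scope ring_scope.

Lemma real_eig (R : realType) (n : nat) (B : 'M[R]_n) :
  (0 < n)%N ->
  (forall l m : R[i], eigenvalue (cmx B) l -> eigenvalue (cmx B) m ->
      l != m -> `|l| != `|m|) ->
  exists (mu : R) (v : 'rV[R]_n), v *m B = mu *: v /\ v != 0.
Proof.
move=> n0 Hd.
have [a Ha] := Theorem7' (cmx B) n0.
have Hp : char_poly (cmx B) = map_poly (real_complex R) (char_poly B).
  by rewrite /cmx map_char_poly.
have Hc : eigenvalue (cmx B) a^*%C.
  rewrite eigenvalue_root_char -complex_root_conj Hp -map_poly_comp.
  rewrite (eq_map_poly (g := real_complex R)); last by move=> x /=; exact: conjc_real.
  by rewrite -Hp -eigenvalue_root_char.
have Hae : a^*%C = a.
  apply/eqP; apply: contraT => Hne.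
  by have := Hd _ _ Hc Ha Hne; rewrite normcJ eqxx.
move: Ha Hc Hae; case: a => x y Ha Hc [] Hy.
have y0 : y = 0.
  by move: Hy; lra.
subst y.
exists x.
have : eigenvalue B x.
  by rewrite eigenvalue_root_char -(fmorph_root (real_complex R)) -Hp -eigenvalue_root_char.
by move/eigenvalueP => [v Hv Hv0]; exists v.
Qed.

Lemma qo_lt (k n : nat) (n0 : (0 < n)%N) (j : 'I_(k * n)) : (j %/ n < k)%N.
Proof. by rewrite ltn_divLR. Qed.

Theorem lemma3 (R : realType) (n : nat) (C : R) (s : R -> R)
  (A B : 'M[R]_n) :
  (0 < n)%N -> 0 < C -> sigmoidal s ->
  A \in unitmx -> B \in unitmx ->
  diagonalizable (cmx A) -> diagonalizable (cmx B) ->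
  (exists (q : nat) (a : R),
      [/\ (0 < q <= n)%N, a != 0, A ^+ q = a%:M &
          (1%:M - a *: B ^+ q) \in unitmx]) ->
  (forall l m : R[i], eigenvalue (cmx B) l -> eigenvalue (cmx B) m ->
      l != m -> `|l| != `|m|) ->
  forall k : nat, (0 < k)%N -> Gsigk C s k `<=` Ssig C s A B k.
Proof.
move=> n0 C0 _ _ _ _ _ _ Hd k _ f [m [g [Hmk Hg ->]]].
have [mu [v [Hv Hv0]]] := @real_eig R n B n0 Hd.
have [c0 Hc0] : exists c, v 0 c != 0.
  apply: contrapT => nE; move/eqP: Hv0; apply; apply/matrixP => i j.
  rewrite !mxE ord1; apply/eqP; apply: contraT => H; exfalso.
  by apply: nE; exists j.
pose w := (v 0 c0)^-1 *: v.
have Hw : w *m B = mu *: w by rewrite /w -scalemxAl Hv !scalerA mulrC.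
have Hw1 : w 0 c0 = 1 by rewrite /w mxE mulVf.
clearbody w.
have HE : forall i, exists p : R * 'cV[R]_n * R,
    `|p.1.1| <= 2 * C /\ g i = neuron s p.1.1 p.1.2 p.2.
  by move=> i; have [al [y [th [H1 H2]]]] := Hg i; exists (al, y, th).
have [P HP] := choice HE.
pose Pk (i : 'I_k) : R * 'cV[R]_n * R :=
  if @insub _ (fun x => x < m)%N _ (val i) is Some i' then P i' else (0, 0, 0).
pose qo (j : 'I_(k * n)) : 'I_k := Ordinal (@qo_lt k n n0 j).
pose ro (j : 'I_(k * n)) : 'I_n := Ordinal (ltn_pmod j n0).
have qoblk i c : qo (blk i c) = i.
  apply: val_inj => /=; rewrite divnMDl // divn_small // addn0 //.
have roblk i c : ro (blk i c) = c.
  apply: val_inj => /=; rewrite modnMDl modn_small //.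
have blkqr j : blk (qo j) (ro j) = j.
  by apply: val_inj => /=; rewrite -divn_eq.
exists (fun j => if ro j == c0 then (Pk (qo j)).1.1 else 0).
exists (fun j => w 0 (ro j) *: (Pk (qo j)).1.2).
exists (fun j => (Pk (qo j)).2).
split.
- move=> j; case: (ro j == c0); last by rewrite normr0; lra.
  rewrite /Pk; case: insubP => [i' _ _|_]; first by case: (HP i').
  by rewrite /= normr0; lra.
- move=> i.
  have HM : blockM (fun j => w 0 (ro j) *: (Pk (qo j)).1.2) i = (Pk i).1.2 *m w.
    by apply/matrixP => r c; rewrite !mxE qoblk roblk big_ord1 mulrC.
  exists ((Pk i).1.2 - mu *: (A *m (Pk i).1.2)), w^T.
  rewrite trmxK HM mulmxA -(mulmxA _ w B) Hw -scalemxAr mulmxBl -scalemxAl.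
  done.
- apply: funext => x.
  rewrite (partition_big qo xpredT) //=.
  transitivity (\sum_(b < k) (Pk b).1.1 * s (dotv (Pk b).1.2 x + (Pk b).2)); last first.
    apply: eq_bigr => b _.
    rewrite (bigD1 (blk b c0)) /= ?qoblk ?eqxx //.
    rewrite big1 ?addr0; first by rewrite roblk eqxx Hw1 scale1r.
    move=> j /andP [/eqP Hq Hne]; rewrite ifF ?mul0r //.
    apply/negbTE; apply: contra Hne => /eqP Hr.
    by rewrite -Hq -Hr blkqr.
  rewrite (bigID (fun b : 'I_k => (b < m)%N)) /= [X in _ = _ + X]big1 ?addr0; last first.
    by move=> b Hb; rewrite /Pk insubN //= mul0r.
  rewrite (big_ord_narrow Hmk); apply: eq_bigr => i _.
  have -> : Pk (widen_ord Hmk i) = P i.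
    by rewrite /Pk /= valK.
  by case: (HP i) => _ ->.
Qed.
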